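(* Let $\mathbf v\in\omega^{<\omega}$ and let $O\subsetneq\mathbf S_{\mathbf v}$ be open in the Baire space and $\pi$-dense at $\mathbf v$. Then there is a foliage tree $\mathbf G$ such that: (a1) $0_{\mathbf G}=\mathbf v$; (a2) $\mathrm{height}\,\mathbf G\le\omega$; (a3) $\mathbf G$ is $\aleph_0$-branching; (a4) $\mathbf G$ has bounded chains; (a5) $\mathbf G$ is locally strict; (a6) $\mathbf G$ is open in the Baire space; (a7) $\mathbf G$ is a foliage graft for $\mathbf S$; (a8) $\mathbf G$ preserves shoots of $\mathbf S$; (a9) $\mathrm{impl}\,\mathbf G\ne\emptyset$; (a10) $\mathrm{cut}(\mathbf S,\mathbf G)=\mathbf S_{\mathbf v}\setminus O$; (a11) $O$ is the union of the pairwise disjoint family $(\mathbf S_z)_{z\in\max\mathbf G}$.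
   Context: Trees: a tree is a pair $(Q,<)$ with $<$ irreflexive transitive and predecessor sets well-ordered; $\mathrm{sons}(x)$ = immediate successors; $\max$ = maximal nodes; $0$ = least node; bounded chains: every nonempty chain has an upper-bound node; $\aleph_0$-branching: every non-maximal node has exactly $\aleph_0$ sons; height of a tree = least ordinal $\beta$ such that no node has predecessor set of order type $\beta$; $A{\downarrow}=\{v:\exists a\in A\ a\le v\}$. A graft for a tree $\mathcal T$ is a tree $\mathcal G$ with more than one node, least node $0_{\mathcal G}\in\mathrm{nodes}\,\mathcal T$, $\max\mathcal G\subseteq\{v\in\mathrm{nodes}\,\mathcal T:v>_{\mathcal T}0_{\mathcal G}\}$ an antichain in $\mathcal T$, and $\mathrm{impl}\,\mathcal G:=\mathrm{nodes}\,\mathcal G\setminus(\{0_{\mathcal G}\}\cup\max\mathcal G)$ disjoint from $\mathrm{nodes}\,\mathcal T$; $\mathrm{expl}(\mathcal T,\mathcal G)=\{v:v>_{\mathcal T}0_{\mathcal G}\}\setminus(\max\mathcal G){\downarrow}_{\mathcal T}$. Foliage trees: $\mathbf F=(\mathcal T,l)$, leaves $\mathbf F_x=l(x)$; tree notions refer to the skeleton $\mathcal T$; nonincreasing: $x\le y\Rightarrow\mathbf F_y\subseteq\mathbf F_x$; locally strict: each non-maximal $\mathbf F_x$ is the union of the pairwise disjoint family $(\mathbf F_s)_{s\in\mathrm{sons}(x)}$; open in a space: all leaves open; $\mathrm{flesh}\,\mathbf F=\bigcup_x\mathbf F_x$; $\mathrm{shoot}_{\mathbf F}(z)=\{\bigcup_{s\in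 C}\mathbf F_s:C$ cofinite subset of $\mathrm{sons}(z)\}$; $\mathrm{scope}_{\mathbf F}(p)=\{y:p\in\mathbf F_y\}$; $\gamma\gg\delta$ means every nonempty $D\in\delta$ contains some nonempty $G\in\gamma$. The standard foliage tree $\mathbf S$ has skeleton $(\omega^{<\omega},\subsetneq)$ and leaves $\mathbf S_x=\{p\in\omega^\omega:x\subseteq p\}$; the Baire space is $\omega^\omega$ with the product topology ($\omega$ discrete). $A\subseteq\omega^\omega$ is $\pi$-dense at $x\in\omega^{<\omega}$ iff for every $y\in\omega^{<\omega}$ with $y\supseteq x$ the set $\{n\in\omega:\mathbf S_{y^\frown\langle n\rangle}\subseteq A\}$ is infinite. A foliage graft for a nonincreasing foliage tree $\mathbf F$ is a nonincreasing foliage tree $\mathbf G$ whose skeleton is a graft for the skeleton of $\mathbf F$, with $\mathbf G_{0_{\mathbf G}}\subseteq\mathbf F_{0_{\mathbf G}}$ and $\mathbf G_m=\mathbf F_m$ for all $m\in\max\mathbf G$; $\mathrm{cut}(\mathbf F,\mathbf G)=\mathbf F_{0_{\mathbf G}}\setminus\mathbf G_{0_{\mathbf G}}$. $\mathbf G$ preserves shoots of $\mathbf F$ iff for each $p\in\mathrm{flesh}\,\mathbf G$ and each $y\in\mathrm{scope}_{\mathbf F}(p)\cap(\{0_{\mathbf G}\}\cup\mathrm{expl}(\mathbf F,\mathbf G))$ there is $x\in\mathrm{scope}_{\mathbf G}(p)\cap(\{0_{\mathbf G}\}\cup\mathrm{impl}\,\mathbf G)$ with $\mathrm{shoot}_{\mathbf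 G}(x)\gg\mathrm{shoot}_{\mathbf F}(y)$ (implant and explant refer to skeletons). *)

(* Defs.v *)
From Stdlib Require Import List Arith.
Import ListNotations.

Definition Baire := nat -> nat.
Definition pset := Baire -> Prop.

Record tree (N : Type) := Tree { nodes : N -> Prop; tlt : N -> N -> Prop }.
Arguments Tree {N}.
Arguments nodes {N}.
Arguments tlt {N}.

Definition tle {N} (T : tree N) (x y : N) : Prop := x = y \/ tlt T x y.

Definition well_ordered {N} (A : N -> Prop) (R : N -> N -> Prop) : Prop :=
  (forall a b, A a -> A b -> a = b \/ R a b \/ R b a) /\
  (forall B : N -> Prop, (exists b, B b) -> (forall b, B b -> A b) ->
     exists m, B m /\ forall b, B b -> m = b \/ R m b).

Definition is_tree {N} (T : tree N) : Prop :=
  (forall x y, tlt T x y -> nodes T x /\ nodes T y) /\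
  (forall x, ~ tlt T x x) /\
  (forall x y z, tlt T x y -> tlt T y z -> tlt T x z) /\
  (forall x, nodes T x -> well_ordered (fun y => tlt T y x) (tlt T)).

Definition sons {N} (T : tree N) (x y : N) : Prop :=
  tlt T x y /\ ~ (exists z, tlt T x z /\ tlt T z y).

Definition is_max {N} (T : tree N) (x : N) : Prop :=
  nodes T x /\ ~ (exists y, tlt T x y).

Definition is_root {N} (T : tree N) (r : N) : Prop :=
  nodes T r /\ forall y, nodes T y -> y <> r -> tlt T r y.

Definition order_type_nat {N} (A : N -> Prop) (R : N -> N -> Prop) (n : nat) : Prop :=
  exists f : nat -> N,
    (forall i, i < n -> A (f i)) /\
    (forall a, A a -> exists i, i < n /\ f i = a) /\
    (forall i j, i < n -> j < n -> (i < j <-> R (f i) (f j))).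

Definition order_type_omega {N} (A : N -> Prop) (R : N -> N -> Prop) : Prop :=
  exists f : nat -> N,
    (forall i, A (f i)) /\
    (forall a, A a -> exists i, f i = a) /\
    (forall i j, i < j <-> R (f i) (f j)).

(* Ordinals <= omega are encoded as option nat (None = omega). *)
Definition order_type {N} (A : N -> Prop) (R : N -> N -> Prop) (b : option nat) : Prop :=
  match b with
  | Some n => order_type_nat A R n
  | None => order_type_omega A R
  end.

(* height T <= omega  iff  some ordinal beta <= omega is not the order type of
   the predecessor set of any node (height = least such beta). *)
Definition height_le_omega {N} (T : tree N) : Prop :=
  exists b : option nat, forall x, nodes T x ->
    ~ order_type (fun y => tlt T y x) (tlt T) b.

Definition aleph0_branching {N} (T : tree N) : Prop :=
  forall x, nodes T x -> ~ is_max T x ->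
    exists f : nat -> N, (forall i j, f i = f j -> i = j) /\
      (forall y, sons T x y <-> exists i, f i = y).

Definition bounded_chains {N} (T : tree N) : Prop :=
  forall C : N -> Prop, (exists c, C c) -> (forall c, C c -> nodes T c) ->
    (forall a b, C a -> C b -> a = b \/ tlt T a b \/ tlt T b a) ->
    exists u, nodes T u /\ forall c, C c -> tle T c u.

Definition impl {N} (G : tree N) (r : N) (x : N) : Prop :=
  nodes G x /\ x <> r /\ ~ is_max G x.

Definition expl {N} (T G : tree N) (r : N) (v : N) : Prop :=
  tlt T r v /\ ~ (exists a, is_max G a /\ tle T a v).

Definition is_graft {N} (T G : tree N) (r : N) : Prop :=
  is_tree T /\ is_tree G /\
  (exists x y, nodes G x /\ nodes G y /\ x <> y) /\
  is_root G r /\ nodes T r /\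
  (forall m, is_max G m -> nodes T m /\ tlt T r m) /\
  (forall m m', is_max G m -> is_max G m' -> m <> m' -> ~ tlt T m m') /\
  (forall x, impl G r x -> ~ nodes T x).

Record ftree (N : Type) := FTree { skel : tree N; leaf : N -> pset }.
Arguments FTree {N}.
Arguments skel {N}.
Arguments leaf {N}.

Definition nonincreasing {N} (F : ftree N) : Prop :=
  forall x y, nodes (skel F) x -> nodes (skel F) y -> tle (skel F) x y ->
    forall p, leaf F y p -> leaf F x p.

Definition locally_strict {N} (F : ftree N) : Prop :=
  forall x, nodes (skel F) x -> ~ is_max (skel F) x ->
    (forall p, leaf F x p <-> exists s, sons (skel F) x s /\ leaf F s p) /\
    (forall s s', sons (skel F) x s -> sons (skel F) x s' -> s <> s' ->
       forall p, leaf F s p -> leaf F s' p -> False).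

Definition open_set (U : pset) : Prop :=
  forall p, U p -> exists n, forall q, (forall i, i < n -> q i = p i) -> U q.

Definition open_ftree {N} (F : ftree N) : Prop :=
  forall x, nodes (skel F) x -> open_set (leaf F x).

Definition flesh {N} (F : ftree N) (p : Baire) : Prop :=
  exists x, nodes (skel F) x /\ leaf F x p.

Definition finite_set {N} (A : N -> Prop) : Prop :=
  exists l : list N, forall a, A a -> In a l.

Definition shoot {N} (F : ftree N) (z : N) (D : pset) : Prop :=
  exists C : N -> Prop, (forall s, C s -> sons (skel F) z s) /\
    finite_set (fun s => sons (skel F) z s /\ ~ C s) /\
    (forall p, D p <-> exists s, C s /\ leaf F s p).

Definition scope {N} (F : ftree N) (p : Baire) (y : N) : Prop :=
  nodes (skel F) y /\ leaf F y p.

Definition refines (gamma delta : pset -> Prop) : Prop :=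
  forall D, delta D -> (exists p, D p) ->
    exists E, gamma E /\ (exists p, E p) /\ forall p, E p -> D p.

Definition foliage_graft {N} (F G : ftree N) (r : N) : Prop :=
  nonincreasing F /\ nonincreasing G /\ is_graft (skel F) (skel G) r /\
  (forall p, leaf G r p -> leaf F r p) /\
  (forall m, is_max (skel G) m -> forall p, leaf G m p <-> leaf F m p).

Definition preserves_shoots {N} (F G : ftree N) (r : N) : Prop :=
  forall p, flesh G p -> forall y, scope F p y ->
    (y = r \/ expl (skel F) (skel G) r y) ->
    exists x, scope G p x /\ (x = r \/ impl (skel G) r x) /\
      refines (shoot G x) (shoot F y).

(* The standard foliage tree S, with nodes omega^{<omega} embedded as inl into
   the node type (list nat + I); inr nodes are not nodes of S. *)
Definition strict_prefix (x y : list nat) : Prop := exists z, z <> [] /\ y = x ++ z.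

Definition Sleaf (x : list nat) (p : Baire) : Prop :=
  forall i, i < length x -> p i = nth i x 0.

Definition S_tree (I : Type) : tree (list nat + I) :=
  Tree (fun n => match n with inl _ => True | inr _ => False end)
       (fun a b => match a, b with
                   | inl x, inl y => strict_prefix x y
                   | _, _ => False end).

Definition S_ftree (I : Type) : ftree (list nat + I) :=
  FTree (S_tree I) (fun n => match n with inl x => Sleaf x | inr _ => fun _ => False end).

Definition pi_dense (A : pset) (x : list nat) : Prop :=
  forall y, (exists z, y = x ++ z) ->
    forall m, exists n, m <= n /\ forall p, Sleaf (y ++ [n]) p -> A p.

(* Main.v *)
Require Import Defs.
From Stdlib Require Import List Arith Lia Classical ClassicalEpsilon Cantor.
Import ListNotations.

Ltac sp := repeat match goal with |- _ /\ _ => split end.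

Definition prefix (a b : list nat) := exists w, b = a ++ w.
Definition pre (p : Baire) k := map p (seq 0 k).
Definition pt (c : list nat) : Baire := fun i => nth i c 0.

Lemma pre_length p k : length (pre p k) = k.
Proof. unfold pre. rewrite length_map, length_seq. reflexivity. Qed.

Lemma nth_pre p k i : i < k -> nth i (pre p k) 0 = p i.
Proof.
  intro H. unfold pre. rewrite nth_indep with (d' := p 0) by (rewrite length_map, length_seq; lia).
  rewrite map_nth, seq_nth by lia. reflexivity.
Qed.

Lemma Sleaf_pre a p : Sleaf a p <-> a = pre p (length a).
Proof.
  split.
  - intro H. apply nth_ext with (d := 0) (d' := 0). rewrite pre_length; auto.
    intros i Hi. rewrite nth_pre by lia. symmetry; apply H; auto.
  - intros H i Hi. rewrite H. rewrite nth_pre; auto.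
Qed.

Lemma Sleaf_pre_self q k : Sleaf (pre q k) q.
Proof. apply Sleaf_pre. rewrite pre_length. reflexivity. Qed.

Lemma Sleaf_pt c : Sleaf c (pt c).
Proof. intros i Hi. reflexivity. Qed.

Lemma pre_add p k j : pre p (k + j) = pre p k ++ map p (seq k j).
Proof. unfold pre. rewrite seq_app, map_app. reflexivity. Qed.

Lemma pre_S p k : pre p (S k) = pre p k ++ [p k].
Proof. replace (S k) with (k + 1) by lia. rewrite pre_add. reflexivity. Qed.

Lemma pre_prefix q j k : j <= k -> prefix (pre q j) (pre q k).
Proof. intro H. exists (map q (seq j (k - j))). replace k with (j + (k - j)) at 1 by lia.
  apply pre_add. Qed.

Lemma prefix_refl a : prefix a a.
Proof. exists []. rewrite app_nil_r. reflexivity. Qed.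

Lemma prefix_trans a b c : prefix a b -> prefix b c -> prefix a c.
Proof. intros [w1 ->] [w2 ->]. exists (w1 ++ w2). rewrite app_assoc. reflexivity. Qed.

Lemma prefix_len a b : prefix a b -> length a <= length b.
Proof. intros [w ->]. rewrite length_app. lia. Qed.

Lemma prefix_eq a b : prefix a b -> length b <= length a -> a = b.
Proof. intros [w ->] H. rewrite length_app in H. destruct w; [rewrite app_nil_r; auto|simpl in H; lia]. Qed.

Lemma prefix_Sleaf a b p : prefix a b -> Sleaf b p -> Sleaf a p.
Proof. intros [w ->] H i Hi. rewrite H by (rewrite length_app; lia). apply app_nth1; auto. Qed.

Lemma Sleaf_comp a b p : Sleaf a p -> Sleaf b p -> prefix a b \/ prefix b a.
Proof.
  intros Ha Hb. apply Sleaf_pre in Ha. apply Sleaf_pre in Hb.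
  destruct (le_lt_dec (length a) (length b)).
  - left. rewrite Ha, Hb. apply pre_prefix; auto.
  - right. rewrite Ha, Hb. apply pre_prefix; lia.
Qed.

Lemma prefix_comp a b c : prefix a c -> prefix b c -> prefix a b \/ prefix b a.
Proof. intros H1 H2. apply Sleaf_comp with (p := pt c); eapply prefix_Sleaf; eauto; apply Sleaf_pt. Qed.

Lemma Sleaf_last y n p : Sleaf (y ++ [n]) p -> p (length y) = n.
Proof. intro H. rewrite H by (rewrite length_app; simpl; lia). rewrite nth_middle. reflexivity. Qed.

Lemma prefix_snoc a b n : prefix a (b ++ [n]) -> prefix a b \/ a = b ++ [n].
Proof.
  intro H. destruct (le_lt_dec (length a) (length b)).
  - left. destruct (prefix_comp a b (b ++ [n]) H) as [H1|H1]; auto. exists [n]; auto.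
    apply prefix_eq in H1; auto. subst. apply prefix_refl.
  - right. apply prefix_eq; auto. rewrite length_app; simpl; lia.
Qed.

Lemma prefix_antisym a b : prefix a b -> prefix b a -> a = b.
Proof. intros H1 H2. apply prefix_eq; auto. apply prefix_len; auto. Qed.

Lemma prefix_strict_len a b : prefix a b -> a <> b -> length a < length b.
Proof. intros H1 H2. destruct (le_lt_dec (length b) (length a)); auto.
  exfalso. apply H2. apply prefix_eq; auto. Qed.

Lemma prefix_strict_decomp a b : prefix a b -> a <> b -> exists n w, b = (a ++ [n]) ++ w.
Proof. intros [w ->] H. destruct w as [|n w]. rewrite app_nil_r in H; congruence.
  exists n, w. rewrite <- app_assoc. reflexivity. Qed.

Lemma strict_prefix_iff x y : strict_prefix x y <-> prefix x y /\ x <> y.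
Proof. split.
  - intros [z [Hz ->]]. split. exists z; auto. intro H.
    assert (length (x ++ z) = length x) by (rewrite <- H; auto). rewrite length_app in H0.
    destruct z; simpl in *; [congruence|lia].
  - intros [[w ->] H]. exists w. split; auto. intro; subst. rewrite app_nil_r in H; auto.
Qed.

Lemma nat_least (P : nat -> Prop) : (exists n, P n) -> exists n, P n /\ forall m, P m -> n <= m.
Proof.
  intros [n Hn]. revert Hn. induction n as [n IH] using lt_wf_ind. intro Hn.
  destruct (classic (exists m, m < n /\ P m)) as [[m [Hm Pm]]|Hno].
  - apply (IH m Hm Pm).
  - exists n. split; auto. intros m Pm. destruct (le_lt_dec n m); auto. exfalso; apply Hno; eauto.
Qed.

Lemma In_le_sum {A} (f : A -> nat) x l : In x l -> f x <= list_sum (map f l).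
Proof. induction l as [|a l IH]; simpl; intro H; [contradiction|destruct H as [->|H]]; [lia|]. specialize (IH H). lia. Qed.


Definition Ssub (O : pset) (u : list nat) := forall p, Sleaf u p -> O p.
Definition Yn (v : list nat) (O : pset) y :=
  prefix v y /\ forall w, prefix v w -> prefix w y -> ~ Ssub O w.
Definition Mn (v : list nat) (O : pset) z :=
  exists y n, z = y ++ [n] /\ Yn v O y /\ Ssub O z.

Lemma Y_closed v O y w : Yn v O y -> prefix v w -> prefix w y -> Yn v O w.
Proof. intros [H1 H2] H3 H4. split; auto. intros u Hu1 Hu2. apply H2; auto. eapply prefix_trans; eauto. Qed.

Lemma Y_snoc v O y n : Yn v O y -> ~ Ssub O (y ++ [n]) -> Yn v O (y ++ [n]).
Proof. intros [H1 H2] H3. split. eapply prefix_trans; eauto. exists [n]; auto.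
  intros w Hw1 Hw2. destruct (prefix_snoc _ _ _ Hw2) as [H| ->]; auto. Qed.

Lemma Y_v v O : ~ Ssub O v -> Yn v O v.
Proof. intro H. split. apply prefix_refl. intros w H1 H2. rewrite (prefix_antisym _ _ H2 H1). auto. Qed.

Lemma Y_len v O y : Yn v O y -> length v <= length y.
Proof. intros [H _]. apply prefix_len; auto. Qed.

Lemma M_len v O z : Mn v O z -> length v < length z.
Proof. intros [y [n [-> [Hy _]]]]. apply Y_len in Hy. rewrite length_app; simpl; lia. Qed.

Lemma M_neq v O z : Mn v O z -> z <> v.
Proof. intros H ->. apply M_len in H. lia. Qed.

Lemma M_prefix v O z : Mn v O z -> prefix v z.
Proof. intros [y [n [-> [[Hy _] _]]]]. eapply prefix_trans; eauto. exists [n]; auto. Qed.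

Lemma M_not_prefix v O z y : Mn v O z -> Yn v O y -> ~ prefix z y.
Proof. intros Hz [Hy1 Hy2] H. apply (Hy2 z); auto. apply (M_prefix v O z Hz).
  destruct Hz as [y0 [n [_ [_ Hs]]]]. auto. Qed.

Lemma M_disj v O z z' p : Mn v O z -> Mn v O z' -> Sleaf z p -> Sleaf z' p -> z = z'.
Proof.
  intros Hz Hz' H1 H2.
  assert (G : forall a b, Mn v O a -> Mn v O b -> prefix a b -> a = b).
  { intros a b Ha Hb Hab. destruct (classic (a = b)) as [|Hne]; auto. exfalso.
    destruct Hb as [yb [nb [Eb [Yb Sb]]]]. subst b.
    destruct (prefix_snoc _ _ _ Hab) as [H| ->]; [|congruence].
    apply (M_not_prefix v O a yb); auto. }
  destruct (Sleaf_comp _ _ _ H1 H2) as [H|H]; auto. symmetry; auto.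
Qed.

Lemma exists_M v O u : ~ Ssub O v -> prefix v u -> Ssub O u -> exists z, Mn v O z /\ prefix z u.
Proof.
  intros Hv Hvu Hu. set (q := pt u).
  assert (Eu : u = pre q (length u)) by (apply Sleaf_pre, Sleaf_pt).
  assert (Ev : v = pre q (length v)) by (apply Sleaf_pre; eapply prefix_Sleaf; eauto; apply Sleaf_pt).
  destruct (nat_least (fun k => length v <= k /\ k <= length u /\ Ssub O (pre q k))) as [k [[K1 [K2 K3]] Kmin]].
  { exists (length u). split. apply prefix_len; auto. split; auto. rewrite <- Eu; auto. }
  destruct k as [|k'].
  { exfalso. apply Hv. rewrite Ev. replace (length v) with 0 by lia. auto. }
  destruct (Nat.eq_dec (S k') (length v)) as [E|E].
  { exfalso. apply Hv. rewrite Ev, <- E. auto. }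
  exists (pre q (S k')). split.
  - exists (pre q k'), (q k'). split. apply pre_S. split; auto.
    split. rewrite Ev. apply pre_prefix; lia.
    intros w Hw1 Hw2 Hw.
    assert (Ew : w = pre q (length w)).
    { apply Sleaf_pre. eapply prefix_Sleaf; eauto. apply Sleaf_pre_self. }
    assert (length w <= k') by (apply prefix_len in Hw2; rewrite pre_length in Hw2; auto).
    specialize (Kmin (length w)). assert (S k' <= length w); [|lia].
    apply Kmin. split. apply prefix_len; auto. split. lia. rewrite <- Ew; auto.
  - rewrite Eu. apply pre_prefix; auto.
Qed.

Lemma O_cover v O p : (forall p, O p -> Sleaf v p) -> ~ Ssub O v -> open_set O -> O p ->
  exists z, Mn v O z /\ Sleaf z p.
Proof.
  intros Hsub Hv Hop Hp. destruct (Hop p Hp) as [N HN].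
  set (u := pre p (N + length v)).
  destruct (exists_M v O u Hv) as [z [Hz1 Hz2]].
  - assert (Ev : v = pre p (length v)) by (apply Sleaf_pre; auto).
    rewrite Ev. apply pre_prefix. lia.
  - intros q Hq. apply HN. intros i Hi. rewrite Hq by (unfold u; rewrite pre_length; lia).
    unfold u; rewrite nth_pre; auto; lia.
  - exists z. split; auto. eapply prefix_Sleaf; eauto. apply Sleaf_pre_self.
Qed.

Lemma M_sub v O z p : Mn v O z -> Sleaf z p -> O p.
Proof. intros [y [n [-> [_ Hs]]]] H. apply Hs; auto. Qed.

Definition pick (O : pset) y m := epsilon (inhabits 0) (fun n => m <= n /\ Ssub O (y ++ [n])).
Fixpoint gseq (O : pset) y k := match k with 0 => pick O y 0 | S k => pick O y (S (gseq O y k)) end.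
Definition cls (O : pset) y n := length y + fst (Cantor.of_nat (epsilon (inhabits 0) (fun k => gseq O y k = n))).

Lemma pick_spec v O y m : pi_dense O v -> prefix v y -> m <= pick O y m /\ Ssub O (y ++ [pick O y m]).
Proof. intros Hd Hy. unfold pick. apply epsilon_spec. destruct (Hd y Hy m) as [n [H1 H2]]. exists n. split; auto. Qed.

Lemma gseq_spec v O y : pi_dense O v -> prefix v y -> forall k,
  Ssub O (y ++ [gseq O y k]) /\ gseq O y k < gseq O y (S k) /\ k <= gseq O y k.
Proof.
  intros Hd Hy k. induction k as [|k IH].
  - simpl. destruct (pick_spec v O y 0 Hd Hy). destruct (pick_spec v O y (S (pick O y 0)) Hd Hy). repeat split; auto; lia.
  - destruct IH as [_ [I2 I3]]. simpl. simpl in I2.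
    destruct (pick_spec v O y (S (gseq O y k)) Hd Hy).
    destruct (pick_spec v O y (S (pick O y (S (gseq O y k)))) Hd Hy). repeat split; auto; lia.
Qed.

Lemma gseq_mono v O y : pi_dense O v -> prefix v y -> forall i j, i < j -> gseq O y i < gseq O y j.
Proof.
  intros Hd Hy i j H. induction H.
  - apply (gseq_spec v O y Hd Hy i).
  - pose proof (proj1 (proj2 (gseq_spec v O y Hd Hy m))). lia.
Qed.

Lemma gseq_inj v O y : pi_dense O v -> prefix v y -> forall i j, gseq O y i = gseq O y j -> i = j.
Proof. intros Hd Hy i j H. destruct (lt_eq_lt_dec i j) as [[H1|H1]|H1]; auto;
  apply (gseq_mono v O y Hd Hy) in H1; lia. Qed.

Lemma cls_ge O y n : length y <= cls O y n.
Proof. unfold cls. lia. Qed.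

Lemma cls_fiber v O y h m : pi_dense O v -> prefix v y -> length y <= h ->
  exists n, m <= n /\ Ssub O (y ++ [n]) /\ cls O y n = h.
Proof.
  intros Hd Hy Hh. set (k := Cantor.to_nat (h - length y, m)).
  assert (Hk : m <= k) by (pose proof (Cantor.to_nat_non_decreasing (h - length y) m); unfold k; lia).
  destruct (gseq_spec v O y Hd Hy k) as [S1 [_ S3]].
  exists (gseq O y k). split. lia. split; auto.
  unfold cls. set (e := epsilon _ _).
  assert (He : gseq O y e = gseq O y k) by (unfold e; apply epsilon_spec; eauto).
  apply (gseq_inj v O y Hd Hy) in He. rewrite He. unfold k. rewrite Cantor.cancel_of_to. simpl. lia.
Qed.


Lemma wo_of_rank {N} (R : N -> N -> Prop) (A : N -> Prop) (rk : N -> nat) :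
  (forall a b, R a b -> rk a < rk b) ->
  (forall a b, A a -> A b -> a = b \/ R a b \/ R b a) -> well_ordered A R.
Proof.
  intros Hrk Hlin. split; auto.
  intros B [b0 Hb0] HBA.
  destruct (nat_least (fun k => exists b, B b /\ rk b = k)) as [k [[m [Hm Hmk]] Hmin]]; eauto.
  exists m. split; auto. intros b Hb.
  destruct (Hlin m b (HBA m Hm) (HBA b Hb)) as [H|[H|H]]; auto.
  apply Hrk in H. assert (k <= rk b) by (apply Hmin; eauto). lia.
Qed.

Lemma no_omega {N} (R : N -> N -> Prop) (rk : N -> nat) x :
  (forall a b, R a b -> rk a < rk b) -> ~ order_type_omega (fun y => R y x) R.
Proof.
  intros Hrk [f [H1 [_ H3]]].
  assert (forall i, i <= rk (f i)).
  { induction i. lia. assert (R (f i) (f (S i))) by (apply H3; lia). apply Hrk in H. lia. }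
  specialize (H (rk x)). specialize (Hrk _ _ (H1 (rk x))). lia.
Qed.

Lemma chain_max {N} (R : N -> N -> Prop) (rk : N -> nat) (C : N -> Prop) B :
  (forall a b, R a b -> rk a < rk b) -> (exists c, C c) -> (forall c, C c -> rk c <= B) ->
  (forall a b, C a -> C b -> a = b \/ R a b \/ R b a) ->
  exists u, C u /\ forall c, C c -> c = u \/ R c u.
Proof.
  intros Hrk [c0 Hc0] HB Hch.
  destruct (nat_least (fun k => forall c, C c -> rk c <= k)) as [k [Hk Hmin]]; eauto.
  assert (exists u, C u /\ rk u = k) as [u [Hu Huk]].
  { destruct k as [|k']. exists c0. split; auto. specialize (Hk c0 Hc0). lia.
    destruct (classic (exists u, C u /\ k' < rk u)) as [[u [Hu Hl]]|Hno].
    - exists u. split; auto. specialize (Hk u Hu). lia.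
    - assert (S k' <= k'); [|lia]. apply Hmin. intros c Hc.
      destruct (le_lt_dec (rk c) k'); auto. exfalso; eauto. }
  exists u. split; auto. intros c Hc. destruct (Hch c u Hc Hu) as [H|[H|H]]; auto.
  apply Hrk in H. specialize (Hk c Hc). lia.
Qed.

Lemma enum_inf (P : nat -> Prop) : (forall m, exists n, m <= n /\ P n) ->
  exists e : nat -> nat, (forall i j, e i = e j -> i = j) /\ (forall n, P n <-> exists i, e i = n).
Proof.
  intro Hinf.
  set (next := fun m => epsilon (inhabits 0) (fun n => m <= n /\ P n /\ forall k, m <= k -> P k -> n <= k)).
  assert (Hnext : forall m, m <= next m /\ P (next m) /\ forall k, m <= k -> P k -> next m <= k).
  { intro m. unfold next. apply epsilon_spec.
    destruct (nat_least (fun n => m <= n /\ P n) (Hinf m)) as [n [[N1 N2] N3]].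
    exists n. repeat split; auto. }
  set (e := fix e i := match i with 0 => next 0 | S i => next (S (e i)) end).
  assert (He : forall i, e i < e (S i)) by (intro i; simpl; destruct (Hnext (S (e i))); lia).
  assert (Hmono : forall i j, i < j -> e i < e j).
  { intros i j H. induction H. apply He. specialize (He m). lia. }
  assert (Hge : forall i, i <= e i). { induction i. lia. specialize (He i). lia. }
  assert (HP : forall i, P (e i)). { destruct i; simpl; apply Hnext. }
  exists e. split.
  - intros i j H. destruct (lt_eq_lt_dec i j) as [[H1|H1]|H1]; auto; apply Hmono in H1; lia.
  - intro n. split.
    + intro Hn. destruct (nat_least (fun j => n <= e j)) as [j [Hj Hjmin]]. exists n; auto.
      exists j. destruct j as [|i].
      * simpl in *. destruct (Hnext 0) as [_ [_ H3]]. specialize (H3 n ltac:(lia) Hn). lia.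
      * assert (e i < n) by (destruct (le_lt_dec n (e i)); auto; apply Hjmin in l; lia).
        simpl in *. destruct (Hnext (S (e i))) as [_ [_ H3]]. specialize (H3 n ltac:(lia) Hn). lia.
    + intros [i <-]. auto.
Qed.


Definition NT := (list nat + (list nat * nat))%type.

Definition Gnodes v O (a : NT) : Prop :=
  match a with
  | inl x => x = v \/ Mn v O x
  | inr (y, h) => Yn v O y /\ length y <= h
  end.

Definition Glt v O (a b : NT) : Prop :=
  match a, b with
  | inl x, _ => x = v /\ Gnodes v O b /\ b <> inl v
  | inr (y, h), inr (y', h') => h = h' /\ Yn v O y /\ Yn v O y' /\ length y' <= h /\ prefix y y' /\ y <> y'
  | inr (y, h), inl z => exists y' n, z = y' ++ [n] /\ prefix y y' /\ Yn v O y /\ Yn v O y' /\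
                            Ssub O z /\ cls O y' n = h
  end.

Definition Fleaf v O y h (p : Baire) : Prop :=
  exists y' n, prefix y y' /\ Yn v O y' /\ Ssub O (y' ++ [n]) /\ cls O y' n = h /\ Sleaf (y' ++ [n]) p.

Definition Gleaf v O (a : NT) : pset :=
  match a with
  | inl x => fun p => (x = v /\ O p) \/ (x <> v /\ Sleaf x p)
  | inr (y, h) => Fleaf v O y h
  end.

Definition Gtree v O : tree NT := Tree (Gnodes v O) (Glt v O).
Definition Gft v O : ftree NT := FTree (Gtree v O) (Gleaf v O).

Definition rk (a : NT) : nat :=
  match a with inl x => 2 * length x + 2 | inr (y, _) => 2 * length y + 3 end.

Lemma Glt_rk v O a b : Glt v O a b -> rk a < rk b.
Proof.
  destruct a as [x|[y h]]; destruct b as [z|[y' h']]; simpl.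
  - intros [-> [[->|Hm] Hne]]. congruence. apply M_len in Hm. lia.
  - intros [-> [[Hy _] _]]. apply Y_len in Hy. lia.
  - intros [y' [n [-> [Hp _]]]]. apply prefix_len in Hp. rewrite length_app; simpl; lia.
  - intros [_ [_ [_ [_ [Hp Hne]]]]]. apply prefix_strict_len in Hp; auto. lia.
Qed.

Lemma Glt_nodes v O a b : Glt v O a b -> Gnodes v O a /\ Gnodes v O b.
Proof.
  destruct a as [x|[y h]]; destruct b as [z|[y' h']]; simpl.
  - intros [-> [H _]]. split; [left; reflexivity|exact H].
  - intros [-> [H _]]. split; [left; reflexivity|exact H].
  - intros [y' [n [-> [Hp [Hy [Hy' [Hs Hc]]]]]]]. split.
    + split; auto. apply prefix_len in Hp. pose proof (cls_ge O y' n). lia.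
    + right. exists y', n. auto.
  - intros [<- [Hy [Hy' [Hl [Hp Hne]]]]]. apply prefix_len in Hp. split; split; auto; lia.
Qed.

Lemma Glt_inl_max v O z b : z <> v -> ~ Glt v O (inl z) b.
Proof. simpl. intros H [H' _]. auto. Qed.

Lemma Glt_to_inlv v O a : ~ Glt v O a (inl v).
Proof. intro H. pose proof (Glt_nodes _ _ _ _ H) as [_ _].
  destruct a as [x|[y h]]; simpl in H.
  - destruct H as [_ [_ H]]. auto.
  - destruct H as [y' [n [E [_ [_ [Hy' _]]]]]]. apply Y_len in Hy'.
    assert (length v = length (y' ++ [n])) by congruence. rewrite length_app in H; simpl in H; lia.
Qed.

Lemma Glt_trans v O a b c : Glt v O a b -> Glt v O b c -> Glt v O a c.
Proof.
  intros H1 H2. pose proof (Glt_nodes _ _ _ _ H2) as [_ Nc].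
  destruct a as [x|[y h]].
  - simpl in H1. destruct H1 as [-> _]. simpl. split; auto. split; auto.
    intros ->. eapply Glt_to_inlv; eauto.
  - destruct b as [z|[y' h']].
    + exfalso. destruct H1 as [y' [n [-> [_ [_ [Hy' _]]]]]].
      simpl in H2. destruct H2 as [E _]. apply Y_len in Hy'.
      assert (length (y' ++ [n]) = length v) by congruence. rewrite length_app in H; simpl in H; lia.
    + destruct H1 as [<- [Hy [Hy' [Hl [Hp Hne]]]]].
      destruct c as [z|[y'' h'']].
      * destruct H2 as [y3 [n [-> [Hp2 [_ [Hy3 [Hs Hc]]]]]]].
        exists y3, n. split; [reflexivity|split; [eapply prefix_trans; eauto|auto]].
      * destruct H2 as [<- [_ [Hy'' [Hl' [Hp' Hne']]]]]. simpl.
        split; [reflexivity|split; [auto|split; [auto|split; [auto|split]]]].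
        eapply prefix_trans; eauto. intros ->. apply Hne. apply prefix_antisym; auto.
Qed.

Lemma Glt_lin v O a b x : Glt v O a x -> Glt v O b x -> a = b \/ Glt v O a b \/ Glt v O b a.
Proof.
  intros Ha Hb. pose proof (Glt_nodes _ _ _ _ Ha) as [Na _]. pose proof (Glt_nodes _ _ _ _ Hb) as [Nb _].
  destruct a as [xa|[y1 h1]].
  { destruct Ha as [-> _]. destruct b as [xb|[y2 h2]].
    - destruct Hb as [-> _]. auto.
    - right. left. simpl. split; [reflexivity|split; [exact Nb|congruence]]. }
  destruct b as [xb|[y2 h2]].
  { destruct Hb as [-> _]. right. right. simpl. split; [reflexivity|split; [exact Na|congruence]]. }
  assert (E : h1 = h2 /\ (prefix y1 y2 \/ prefix y2 y1) /\ length y1 <= h1 /\ length y2 <= h1).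
  { destruct x as [z|[y3 h3]].
    - destruct Ha as [ya [na [-> [Pa [_ [_ [_ Ca]]]]]]].
      destruct Hb as [yb [nb [E [Pb [_ [_ [_ Cb]]]]]]].
      apply app_inj_tail in E. destruct E; subst. repeat split.
      eapply prefix_comp; eauto.
      apply prefix_len in Pa; pose proof (cls_ge O yb nb); lia.
      apply prefix_len in Pb; pose proof (cls_ge O yb nb); lia.
    - destruct Ha as [-> [_ [_ [L1 [P1 _]]]]]. destruct Hb as [<- [_ [_ [L2 [P2 _]]]]].
      pose proof (prefix_len _ _ P1). pose proof (prefix_len _ _ P2).
      split; [lia|split; [eapply prefix_comp; eauto|split; lia]]. }
  destruct E as [<- [[P|P] [L1 L2]]]; destruct Na as [Y1 _]; destruct Nb as [Y2 _].
  - destruct (classic (y1 = y2)) as [<-|Hne]; auto. right; left. simpl.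
    split; [reflexivity|split; [auto|split; [auto|split; [auto|split; auto]]]].
  - destruct (classic (y1 = y2)) as [<-|Hne]; auto. right; right. simpl.
    split; [reflexivity|split; [auto|split; [auto|split; [auto|split; auto]]]].
Qed.

Lemma G_is_tree v O : is_tree (Gtree v O).
Proof.
  split; [|split; [|split]]; simpl.
  - apply Glt_nodes.
  - intros x H. apply Glt_rk in H. lia.
  - apply Glt_trans.
  - intros x _. apply wo_of_rank with (rk := rk). apply Glt_rk. intros a b Ha Hb. eapply Glt_lin; eauto.
Qed.



Lemma snoc_neq_v v O y n : Yn v O y -> y ++ [n] <> v.
Proof. intros Hy E. apply Y_len in Hy. assert (length (y ++ [n]) = length v) by congruence.
  rewrite !length_app in H; simpl in H; lia. Qed.

Lemma sons_root v O b : ~ Ssub O v ->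
  (sons (Gtree v O) (inl v) b <-> exists h, b = inr (v, h) /\ length v <= h).
Proof.
  intro Hv. pose proof (Y_v v O Hv) as Yv. split.
  - intros [H1 H2]. simpl in H1. destruct H1 as [_ [Nb Hne]].
    destruct b as [z|[y h]].
    + exfalso. destruct Nb as [->|Hm]; [congruence|].
      destruct Hm as [y' [n [-> [Hy' Hs]]]]. apply H2. exists (inr (v, cls O y' n)).
      split.
      * simpl. split; [reflexivity|split; [split; [exact Yv|]|congruence]].
        pose proof (cls_ge O y' n). apply Y_len in Hy'. lia.
      * simpl. exists y', n. sp; auto. apply Hy'.
    + destruct (classic (y = v)) as [->|Hne']. exists h; split; auto. apply Nb.
      exfalso. apply H2. exists (inr (v, h)). destruct Nb as [Hy Hl]. split.
      * simpl. split; [reflexivity|split; [split; [exact Yv|]|congruence]]. apply Y_len in Hy; lia.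
      * simpl. split; [reflexivity|split; [auto|split; [auto|split; [auto|split]]]]. apply Hy. auto.
  - intros [h [-> Hh]]. split.
    + simpl. split; [reflexivity|split; [split; [exact Yv|exact Hh]|congruence]].
    + intros [m [Hm1 Hm2]]. simpl in Hm1, Hm2. destruct m as [x|[y h']].
      * destruct Hm2 as [-> _]. destruct Hm1 as [_ [_ Hne]]. congruence.
      * destruct Hm2 as [_ [Hy [_ [_ [Hp Hne]]]]]. apply Hne. apply prefix_antisym; auto. apply Hy.
Qed.

Lemma Glt_inr_inl_mid v O y h x b : Glt v O (inr (y, h)) (inl x) -> Glt v O (inl x) b -> False.
Proof. intros H1 H2. destruct H2 as [-> _]. destruct H1 as [y' [n [E [_ [_ [Hy' _]]]]]].
  symmetry in E. revert E. apply snoc_neq_v with (O := O); auto. Qed.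

Lemma sons_inr v O y h b : Yn v O y -> length y <= h ->
  (sons (Gtree v O) (inr (y, h)) b <-> exists n,
     (b = inr (y ++ [n], h) /\ ~ Ssub O (y ++ [n]) /\ S (length y) <= h) \/
     (b = inl (y ++ [n]) /\ Ssub O (y ++ [n]) /\ cls O y n = h)).
Proof.
  intros Hy Hh. split.
  - intros [H1 H2]. destruct b as [z|[y' h']].
    + destruct H1 as [y' [n [-> [Hp [_ [Hy' [Hs Hc]]]]]]].
      destruct (classic (y = y')) as [<-|Hne]. exists n. right. auto.
      exfalso. destruct (prefix_strict_decomp _ _ Hp Hne) as [m [w Ew]].
      assert (Ym : Yn v O (y ++ [m])) by (eapply Y_closed; eauto; [eapply prefix_trans; [apply Hy|exists [m]; auto]|exists w; auto]).
      apply H2. exists (inr (y ++ [m], h)). split.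
      * simpl. split; [reflexivity|split; [auto|split; [auto|split; [|split]]]].
        subst y'. pose proof (cls_ge O ((y ++ [m]) ++ w) n). rewrite !length_app in *. lia.
        exists [m]; auto. intro E. assert (length y = length (y ++ [m])) by congruence. rewrite !length_app in H; simpl in H; lia.
      * simpl. exists y', n. split; [reflexivity|split; [exists w; auto|auto]].
    + destruct H1 as [<- [_ [Hy' [Hl [Hp Hne]]]]].
      destruct (prefix_strict_decomp _ _ Hp Hne) as [m [w Ew]].
      assert (Ym : Yn v O (y ++ [m])) by (eapply Y_closed; eauto; [eapply prefix_trans; [apply Hy|exists [m]; auto]|exists w; auto]).
      destruct w as [|k w].
      * rewrite app_nil_r in Ew. subst y'. exists m. left. split; auto. split.
        destruct Ym as [Ym1 Ym2]. apply Ym2; [apply Ym1|apply prefix_refl].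
        rewrite length_app in Hl; simpl in Hl; lia.
      * exfalso. apply H2. exists (inr (y ++ [m], h)). split.
        -- simpl. sp; auto. subst y'. rewrite !length_app in *. simpl in *. lia.
           exists [m]; auto. intro E. assert (length y = length (y ++ [m])) by congruence. rewrite !length_app in H; simpl in H; lia.
        -- simpl. sp; auto. exists (k :: w); auto. intro E. subst y'.
           assert (length (y ++ [m]) = length ((y ++ [m]) ++ k :: w)) by congruence.
           rewrite !length_app in H; simpl in H; lia.
  - intros [n [[-> [Hs Hl]]|[-> [Hs Hc]]]].
    + split.
      * simpl. sp; auto. apply Y_snoc; auto. rewrite length_app; simpl; lia. exists [n]; auto.
        intro E. assert (length y = length (y ++ [n])) by congruence. rewrite !length_app in H; simpl in H; lia.
      * intros [m [Hm1 Hm2]]. simpl in Hm1, Hm2. destruct m as [x|[y'' h'']].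
        -- eapply Glt_inr_inl_mid; eauto.
        -- destruct Hm1 as [_ [_ [_ [_ [P1 N1]]]]]. destruct Hm2 as [_ [_ [_ [_ [P2 N2]]]]].
           destruct (prefix_snoc _ _ _ P2) as [P3|P3]; [|contradiction].
           apply N1. apply prefix_antisym; auto.
    + split.
      * simpl. exists y, n. sp; auto. apply prefix_refl.
      * intros [m [Hm1 Hm2]]. simpl in Hm1, Hm2. destruct m as [x|[y'' h'']].
        -- eapply Glt_inr_inl_mid; eauto.
        -- destruct Hm1 as [_ [_ [_ [_ [P1 N1]]]]]. destruct Hm2 as [y3 [n3 [E [P2 _]]]].
           apply app_inj_tail in E. destruct E as [<- <-].
           apply N1. apply prefix_antisym; auto.
Qed.



Lemma inr_not_max v O y h : pi_dense O v -> Gnodes v O (inr (y, h)) -> ~ is_max (Gtree v O) (inr (y, h)).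
Proof.
  intros Hd [Hy Hh] [_ Hm]. apply Hm.
  destruct (cls_fiber v O y h 0 Hd (proj1 Hy) Hh) as [n [_ [Hs Hc]]].
  exists (inl (y ++ [n])). simpl. exists y, n. sp; auto. apply prefix_refl.
Qed.

Lemma max_iff v O a : ~ Ssub O v -> pi_dense O v ->
  (is_max (Gtree v O) a <-> exists z, a = inl z /\ Mn v O z).
Proof.
  intros Hv Hd. split.
  - intros Hmax. pose proof Hmax as [Na Hm]. destruct a as [x|[y h]].
    + destruct Na as [->|Hx]; eauto. exfalso. apply Hm. exists (inr (v, length v)).
      simpl. sp; auto; try congruence. apply Y_v; auto.
    + exfalso. exact (inr_not_max v O y h Hd Na Hmax).
  - intros [z [-> Hz]]. split. right; auto. intros [b Hb]. apply (Glt_inl_max v O z b); auto.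
    apply (M_neq v O); auto.
Qed.

Lemma G_aleph0 v O : ~ Ssub O v -> pi_dense O v -> aleph0_branching (Gtree v O).
Proof.
  intros Hv Hd a Na Hnm. destruct a as [x|[y h]].
  - destruct Na as [->|Hx]; [|exfalso; apply Hnm; apply (max_iff v O); eauto].
    exists (fun i => inr (v, length v + i)). split.
    + intros i j E. injection E. lia.
    + intro b. rewrite sons_root by auto. split.
      * intros [h [-> Hh]]. exists (h - length v). f_equal. f_equal. lia.
      * intros [i <-]. exists (length v + i). split; auto. lia.
  - destruct Na as [Hy Hh].
    set (P := fun n => (~ Ssub O (y ++ [n]) /\ S (length y) <= h) \/ (Ssub O (y ++ [n]) /\ cls O y n = h)).
    destruct (enum_inf P) as [e [He1 He2]].
    { intro m. destruct (cls_fiber v O y h m Hd (proj1 Hy) Hh) as [n [H1 [H2 H3]]]. exists n. split; auto. right; auto. }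
    set (son := fun n => if excluded_middle_informative (Ssub O (y ++ [n])) then inl (y ++ [n]) else inr (y ++ [n], h) : NT).
    exists (fun i => son (e i)). split.
    + intros i j E. apply He1. unfold son in E.
      destruct (excluded_middle_informative (Ssub O (y ++ [e i]))); destruct (excluded_middle_informative (Ssub O (y ++ [e j])));
        inversion E as [E']; try (apply app_inj_tail in E'; tauto); apply app_inj_tail in H0; tauto.
    + intro b. rewrite sons_inr by auto. split.
      * intros [n Hn]. assert (P n) by (destruct Hn as [[_ ?]|[_ ?]]; [left|right]; auto).
        apply He2 in H. destruct H as [i Hi]. exists i. rewrite Hi. unfold son.
        destruct (excluded_middle_informative (Ssub O (y ++ [n]))); destruct Hn as [[-> [Hn _]]|[-> [Hn _]]]; tauto.
      * intros [i <-]. exists (e i). assert (P (e i)) by (apply He2; eauto).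
        unfold son. destruct (excluded_middle_informative (Ssub O (y ++ [e i]))); destruct H; [tauto|right; tauto|left; tauto|tauto].
Qed.



Lemma G_bounded v O : bounded_chains (Gtree v O).
Proof.
  intros C [c0 Hc0] HCn Hch. simpl in *.
  destruct (classic (exists z, C (inl z) /\ z <> v)) as [[z [Hz Hzv]]|HnoM].
  - exists (inl z). split; auto. intros c Hc. destruct (Hch c (inl z) Hc Hz) as [H|[H|H]].
    + left; auto.
    + right; auto.
    + exfalso. eapply Glt_inl_max; eauto.
  - assert (Hform : forall c, C c -> c = inl v \/ exists y h, c = inr (y, h)).
    { intros [x|[y h]] Hc; eauto. left. destruct (classic (x = v)) as [->|Hne]; auto.
      exfalso; eauto. }
    destruct (classic (exists y h, C (inr (y, h)))) as [[y0 [h0 Hc1]]|Hno].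
    + assert (Hb : forall c, C c -> rk c <= 2 * h0 + 3).
      { intros c Hc. destruct (HCn _ Hc1) as [Y0 L0].
        destruct (Hform c Hc) as [->|[y [h ->]]].
        -- simpl. apply Y_len in Y0. lia.
        -- destruct (HCn _ Hc) as [Y1 L1].
           destruct (Hch _ _ Hc Hc1) as [E|[E|E]].
           ++ injection E; intros; subst. simpl. lia.
           ++ destruct E as [<- _]. simpl. lia.
           ++ destruct E as [-> _]. simpl. lia. }
      destruct (chain_max (Glt v O) rk C (2 * h0 + 3) (Glt_rk v O) (ex_intro _ _ Hc1) Hb Hch) as [u [Hu Hmax]].
      exists u. split. apply HCn; auto. intros c Hc. unfold tle. destruct (Hmax c Hc); auto.
    + exists (inl v). split. left; auto. intros c Hc. left.
      destruct (Hform c Hc) as [->|[y [h ->]]]; auto. exfalso; eauto.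
Qed.

Lemma Fleaf_Sleaf v O y h p : Fleaf v O y h p -> Sleaf y p.
Proof. intros [y' [n [Hp [_ [_ [_ Hs]]]]]]. eapply prefix_Sleaf; [|eauto].
  eapply prefix_trans; eauto. exists [n]; auto. Qed.

Lemma Fleaf_O v O y h p : Fleaf v O y h p -> O p.
Proof. intros [y' [n [_ [_ [Hs [_ Hl]]]]]]. auto. Qed.

Lemma Gleaf_O v O a p : Gnodes v O a -> Gleaf v O a p -> O p.
Proof.
  destruct a as [x|[y h]]; simpl.
  - intros [->|Hm] [[_ H]|[Hne H]]; auto. congruence. eapply M_sub; eauto.
  - intros _. apply Fleaf_O.
Qed.

Lemma Gleaf_snoc v O y n p : Yn v O y -> (Gleaf v O (inl (y ++ [n])) p <-> Sleaf (y ++ [n]) p).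
Proof. intro Hy. pose proof (snoc_neq_v v O y n Hy). simpl. split.
  - intros [[E _]|[_ H']]; [contradiction|auto].
  - intro. right; auto. Qed.

Lemma G_locally_strict v O : (forall p, O p -> Sleaf v p) -> ~ Ssub O v -> open_set O -> pi_dense O v ->
  locally_strict (Gft v O).
Proof.
  intros Hsub Hv Hop Hd a Na Hnm. simpl in *. destruct a as [x|[y h]].
  - destruct Na as [->|Hx]; [|exfalso; apply Hnm; apply (max_iff v O); eauto].
    split.
    + intro p. split.
      * intro Hp. assert (Op : O p) by (destruct Hp as [[_ ?]|[? _]]; [auto|congruence]).
        destruct (O_cover v O p Hsub Hv Hop Op) as [z [[y' [n [-> [Hy' Hs]]]] Hz]].
        exists (inr (v, cls O y' n)). split.
        -- apply sons_root; auto. eexists; split; eauto. pose proof (cls_ge O y' n). apply Y_len in Hy'. lia.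
        -- simpl. exists y', n. sp; auto. apply Hy'.
      * intros [s [Hs Hl]]. apply sons_root in Hs; auto. destruct Hs as [h [-> _]].
        left. split; auto. eapply Fleaf_O; eauto.
    + intros s s' Hs Hs' Hne p Hl Hl'. apply sons_root in Hs; auto. apply sons_root in Hs'; auto.
      destruct Hs as [h [-> _]]. destruct Hs' as [h' [-> _]]. simpl in Hl, Hl'.
      destruct Hl as [y1 [n1 [_ [Y1 [S1 [C1 L1]]]]]]. destruct Hl' as [y2 [n2 [_ [Y2 [S2 [C2 L2]]]]]].
      assert (E : y1 ++ [n1] = y2 ++ [n2]).
      { eapply (M_disj v O); eauto; [exists y1, n1|exists y2, n2]; auto. }
      apply app_inj_tail in E. destruct E; subst. congruence.
  - destruct Na as [Hy Hh]. split.
    + intro p. split.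
      * intros [y' [n [Hp [Hy' [Hs [Hc Hl]]]]]].
        destruct (classic (y = y')) as [<-|Hne].
        -- exists (inl (y ++ [n])). split. apply sons_inr; auto. exists n; right; auto.
           apply Gleaf_snoc; auto.
        -- destruct (prefix_strict_decomp _ _ Hp Hne) as [m [w Ew]].
           assert (Ym : Yn v O (y ++ [m])) by (eapply Y_closed; eauto; [eapply prefix_trans; [apply Hy|exists [m]; auto]|exists w; auto]).
           exists (inr (y ++ [m], h)). split.
           ++ apply sons_inr; auto. exists m. left. sp; auto.
              destruct Ym as [Ym1 Ym2]. apply Ym2; [apply Ym1|apply prefix_refl].
              subst y'. pose proof (cls_ge O ((y ++ [m]) ++ w) n). rewrite !length_app in *. simpl in *. lia.
           ++ simpl. exists y', n. sp; auto. exists w; auto.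
      * intros [s [Hs Hl]]. apply sons_inr in Hs; auto. destruct Hs as [n [[-> _]|[-> [Hs Hc]]]].
        -- destruct Hl as [y' [n' [Hp Hr]]]. exists y', n'. split; auto. eapply prefix_trans; eauto. exists [n]; auto.
        -- apply Gleaf_snoc in Hl; auto. exists y, n. sp; auto. apply prefix_refl.
    + intros s s' Hs Hs' Hne p Hl Hl'. apply sons_inr in Hs; auto. apply sons_inr in Hs'; auto.
      assert (Hsl : forall s n, (s = inr (y ++ [n], h) \/ s = inl (y ++ [n])) -> Gleaf v O s p -> Sleaf (y ++ [n]) p).
      { intros s0 n0 [->| ->] H. eapply Fleaf_Sleaf; eauto. apply Gleaf_snoc in H; auto. }
      destruct Hs as [n Hn]. destruct Hs' as [n' Hn'].
      assert (n = n').
      { assert (S1 : Sleaf (y ++ [n]) p) by (apply (Hsl s n); [destruct Hn as [[? _]|[? _]]; auto|auto]).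
        assert (S2 : Sleaf (y ++ [n']) p) by (apply (Hsl s' n'); [destruct Hn' as [[? _]|[? _]]; auto|auto]).
        apply Sleaf_last in S1. apply Sleaf_last in S2. congruence. }
      subst n'. destruct Hn as [[-> [N1 _]]|[-> [N1 _]]]; destruct Hn' as [[-> [N2 _]]|[-> [N2 _]]]; tauto.
Qed.



Definition rkS {I} (a : list nat + I) : nat := match a with inl x => length x | inr _ => 0 end.

Lemma S_lt_rk I a b : tlt (S_tree I) a b -> rkS a < rkS b.
Proof. destruct a as [x|]; destruct b as [y|]; simpl; try tauto.
  intro H. apply strict_prefix_iff in H. destruct H. apply prefix_strict_len; auto. Qed.

Lemma S_is_tree I : is_tree (S_tree I).
Proof.
  split; [|split; [|split]].
  - intros [x|] [y|]; simpl; tauto.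
  - intros x H. apply S_lt_rk in H. lia.
  - intros [x|] [y|] [z|]; simpl; try tauto. intros H1 H2.
    apply strict_prefix_iff in H1. apply strict_prefix_iff in H2. apply strict_prefix_iff.
    destruct H1 as [P1 N1]. destruct H2 as [P2 N2]. split. eapply prefix_trans; eauto.
    intros <-. apply N1. apply prefix_antisym; auto.
  - intros x _. apply wo_of_rank with (rk := rkS). apply S_lt_rk.
    intros [a|] [b|]; destruct x as [c|]; simpl; try tauto.
    intros Ha Hb. apply strict_prefix_iff in Ha. apply strict_prefix_iff in Hb.
    destruct Ha as [Pa _]. destruct Hb as [Pb _].
    destruct (classic (a = b)) as [->|Hne]; auto.
    destruct (prefix_comp a b c Pa Pb) as [P|P]; right; [left|right]; apply strict_prefix_iff; auto.
Qed.

Lemma sonsS I a b : sons (S_tree I) (inl a) b <-> exists n, b = inl (a ++ [n]).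
Proof.
  split.
  - intros [H1 H2]. destruct b as [c|]; simpl in H1; [|tauto].
    apply strict_prefix_iff in H1. destruct H1 as [P Ne].
    destruct (prefix_strict_decomp _ _ P Ne) as [n [w ->]].
    exists n. destruct w as [|k w]. rewrite app_nil_r; auto.
    exfalso. apply H2. exists (inl (a ++ [n])). simpl. split; apply strict_prefix_iff; split.
    exists [n]; auto. intro E. assert (length a = length (a ++ [n])) by congruence. rewrite length_app in H; simpl in H; lia.
    exists (k :: w); auto. intro E. assert (length (a ++ [n]) = length ((a ++ [n]) ++ k :: w)) by congruence. rewrite !length_app in H; simpl in H; lia.
  - intros [n ->]. split.
    + simpl. apply strict_prefix_iff. split. exists [n]; auto. intro E. assert (length a = length (a ++ [n])) by congruence. rewrite length_app in H; simpl in H; lia.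
    + intros [[m|] [H1 H2]]; simpl in *; try tauto.
      apply strict_prefix_iff in H1. apply strict_prefix_iff in H2.
      destruct H1 as [P1 N1]. destruct H2 as [P2 N2]. apply prefix_strict_len in P1; auto.
      apply prefix_strict_len in P2; auto. rewrite length_app in P2; simpl in P2; lia.
Qed.

Lemma Glt_leaf v O a b p : Glt v O a b -> Gleaf v O b p -> Gleaf v O a p.
Proof.
  intros H Hl. pose proof (Glt_nodes _ _ _ _ H) as [_ Nb].
  destruct a as [x|[y h]].
  - destruct H as [-> _]. left. split; auto. eapply Gleaf_O; eauto.
  - destruct b as [z|[y' h']].
    + destruct H as [y' [n [-> [Hp [Hy [Hy' [Hs Hc]]]]]]].
      apply Gleaf_snoc in Hl; auto. exists y', n. sp; auto.
    + destruct H as [<- [_ [_ [_ [Hp _]]]]]. destruct Hl as [y'' [n [P Hr]]].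
      exists y'', n. split; auto. eapply prefix_trans; eauto.
Qed.

Lemma G_open v O : open_set O -> open_ftree (Gft v O).
Proof.
  intros Hop a _ p Hp. simpl in *.
  assert (Hbas : forall z, Sleaf z p -> exists N, forall q, (forall i, i < N -> q i = p i) -> Sleaf z q).
  { intros z Hz. exists (length z). intros q Hq i Hi. rewrite Hq; auto. }
  destruct a as [x|[y h]].
  - destruct Hp as [[-> Op]|[Hne Hs]].
    + destruct (Hop p Op) as [N HN]. exists N. intros q Hq. left; auto.
    + destruct (Hbas x Hs) as [N HN]. exists N. intros q Hq. right; auto.
  - destruct Hp as [y' [n [A [B [C [D E]]]]]]. destruct (Hbas _ E) as [N HN].
    exists N. intros q Hq. exists y', n. sp; auto.
Qed.



Definition bnd (k : nat) (b : NT) : nat := match b with inl a => S (nth k a 0) | inr _ => 0 end.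

Lemma refines_inr v O y h : pi_dense O v -> Yn v O y -> length y <= h ->
  refines (shoot (Gft v O) (inr (y, h))) (shoot (S_ftree (list nat * nat)) (inl y)).
Proof.
  intros Hd Hy Hh D [C [HC1 [[l Hl] HD]]] _.
  set (C' := fun s => sons (Gtree v O) (inr (y, h)) s /\
                      exists n, (s = inr (y ++ [n], h) \/ s = inl (y ++ [n])) /\ C (inl (y ++ [n]))).
  exists (fun p => exists s, C' s /\ Gleaf v O s p). split; [|split].
  - exists C'. split; [|split].
    + intros s Hs. apply Hs.
    + exists (flat_map (fun b : NT => match b with inl a => [inr (a, h); inl a] | inr _ => [] end) l).
      intros s [Hs HnC]. pose proof Hs as Hs'. apply sons_inr in Hs'; auto.
      destruct Hs' as [n Hn].
      assert (Hs2 : s = inr (y ++ [n], h) \/ s = inl (y ++ [n])) by (destruct Hn as [[? _]|[? _]]; auto).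
      assert (Hin : In (inl (y ++ [n]) : NT) l).
      { apply Hl. split. apply sonsS. eauto. intro Hc. apply HnC. split; eauto. }
      apply in_flat_map. exists (inl (y ++ [n])). split; auto. simpl. destruct Hs2 as [->| ->]; auto.
    + intro p. reflexivity.
  - set (B := list_sum (map (bnd (length y)) l)).
    destruct (cls_fiber v O y h B Hd (proj1 Hy) Hh) as [n [Hn1 [Hn2 Hn3]]].
    assert (HCn : C (inl (y ++ [n]))).
    { destruct (classic (C (inl (y ++ [n])))) as [|Hc]; auto. exfalso.
      assert (In (inl (y ++ [n]) : NT) l) by (apply Hl; split; [apply sonsS; eauto|auto]).
      apply (In_le_sum (bnd (length y))) in H. unfold B in Hn1. simpl in H. rewrite nth_middle in H. lia. }
    exists (pt (y ++ [n])). exists (inl (y ++ [n])). split.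
    + split. apply sons_inr; auto. exists n; right; auto. exists n. split; auto.
    + apply Gleaf_snoc; auto. apply Sleaf_pt.
  - intros p [s [[_ [n [Hs HCs]]] Hl']]. apply HD. exists (inl (y ++ [n])). split; auto. simpl.
    destruct Hs as [->| ->].
    + eapply Fleaf_Sleaf; eauto.
    + apply Gleaf_snoc in Hl'; auto.
Qed.



Lemma G_preserves v O : (forall p, O p -> Sleaf v p) -> ~ Ssub O v -> open_set O -> pi_dense O v ->
  preserves_shoots (S_ftree (list nat * nat)) (Gft v O) (inl v).
Proof.
  intros Hsub Hv Hop Hd p [x0 [Nx0 Lx0]] yS [NyS Hsl] Hcase.
  assert (Op : O p) by exact (Gleaf_O v O x0 p Nx0 Lx0).
  destruct yS as [y'|]; [|destruct NyS]. simpl in Hsl.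
  assert (Yy : Yn v O y').
  { destruct Hcase as [E|[Hlt Hno]].
    - injection E as ->. apply Y_v; auto.
    - simpl in Hlt. apply strict_prefix_iff in Hlt. destruct Hlt as [Pv _].
      split; auto. intros w Hw1 Hw2 Hw. destruct (exists_M v O w Hv Hw1 Hw) as [z [Hz Pz]].
      apply Hno. exists (inl z). split. apply (max_iff v O); eauto.
      destruct (classic (z = y')) as [->|Hne]. left; auto. right. simpl. apply strict_prefix_iff.
      split; auto. eapply prefix_trans; eauto. }
  destruct (O_cover v O p Hsub Hv Hop Op) as [z [Hz Sz]].
  pose proof Hz as [y'' [n [-> [Hy'' Hs]]]].
  assert (Pyz : prefix y' y'').
  { destruct (Sleaf_comp _ _ _ Hsl Sz) as [P|P].
    - destruct (prefix_snoc _ _ _ P) as [P'| ->]; auto. exfalso. exact (M_not_prefix v O _ _ Hz Yy P).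
    - exfalso. exact (M_not_prefix v O _ _ Hz Yy P). }
  set (h := cls O y'' n).
  assert (Hh : length y' <= h) by (pose proof (cls_ge O y'' n); apply prefix_len in Pyz; unfold h; lia).
  exists (inr (y', h)). split; [|split].
  - split. simpl. split; auto. simpl. exists y'', n. sp; auto.
  - right. split. simpl. split; auto. split. congruence. apply inr_not_max; auto. split; auto.
  - apply refines_inr; auto.
Qed.

Theorem mainTheorem14 (v : list nat) (O : pset)
  (HOsub : forall p, O p -> Sleaf v p)
  (HOne : exists p, Sleaf v p /\ ~ O p)
  (HOopen : open_set O)
  (HOdense : pi_dense O v) :
  exists (I : Type) (G : ftree (list nat + I)),
    is_root (skel G) (inl v) /\
    height_le_omega (skel G) /\
    aleph0_branching (skel G) /\
    bounded_chains (skel G) /\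
    locally_strict G /\
    open_ftree G /\
    foliage_graft (S_ftree I) G (inl v) /\
    preserves_shoots (S_ftree I) G (inl v) /\
    (exists x, impl (skel G) (inl v) x) /\
    (forall p, (Sleaf v p /\ ~ leaf G (inl v) p) <-> (Sleaf v p /\ ~ O p)) /\
    (forall p, O p <-> exists z, is_max (skel G) z /\ leaf (S_ftree I) z p) /\
    (forall z z', is_max (skel G) z -> is_max (skel G) z' -> z <> z' ->
       forall p, leaf (S_ftree I) z p -> leaf (S_ftree I) z' p -> False).
Proof.
  assert (Hv : ~ Ssub O v).
  { intro H. destruct HOne as [p [H1 H2]]. apply H2. apply H; auto. }
  pose proof (Y_v v O Hv) as Yv.
  assert (Hleafv : forall p, Gleaf v O (inl v) p <-> O p).
  { intro p. simpl. split. intros [[_ ?]|[? _]]; [auto|congruence]. intro; left; auto. }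
  exists (list nat * nat)%type, (Gft v O).
  split; [|split; [|split; [|split; [|split; [|split; [|split; [|split; [|split; [|split; [|split]]]]]]]]]].
  - split. left; reflexivity. intros y Ny Hne. simpl. sp; auto.
  - exists None. intros x _. simpl. apply no_omega with (rk := rk). apply Glt_rk.
  - apply G_aleph0; auto.
  - apply G_bounded.
  - apply G_locally_strict; auto.
  - apply G_open; auto.
  - split; [|split; [|split; [|split]]].
    + intros [x|] [y|]; simpl; try tauto. intros _ _ [E|E] p H. injection E as ->; auto.
      apply strict_prefix_iff in E. exact (prefix_Sleaf _ _ _ (proj1 E) H).
    + intros x y _ _ [<-|E] p H; auto. exact (Glt_leaf v O x y p E H).
    + split; [apply S_is_tree|split; [apply G_is_tree|split; [|split; [|split; [|split; [|split]]]]]].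
      * exists (inl v), (inr (v, length v)). simpl. sp; auto. congruence.
      * split. left; reflexivity. intros y Ny Hne. simpl. sp; auto.
      * simpl. auto.
      * intros m Hm. apply (max_iff v O) in Hm; auto. destruct Hm as [z [-> Hz]]. simpl.
        split; auto. apply strict_prefix_iff. split. apply (M_prefix v O); auto.
        intro E. symmetry in E. revert E. apply (M_neq v O); auto.
      * intros m m' Hm Hm' Hne. apply (max_iff v O) in Hm; auto. apply (max_iff v O) in Hm'; auto.
        destruct Hm as [z [-> Hz]]. destruct Hm' as [z' [-> Hz']]. simpl. intro H.
        apply strict_prefix_iff in H. destruct H as [P _]. apply Hne. f_equal.
        apply (M_disj v O z z' (pt z')); auto. eapply prefix_Sleaf; eauto; apply Sleaf_pt. apply Sleaf_pt.
      * intros [x|[y h]] [Nx [Hne Hnm]]; simpl; auto.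
        intros _. destruct Nx as [->|Hx]. congruence. apply Hnm. apply (max_iff v O); eauto.
    + intros p H. simpl. apply HOsub. apply Hleafv; auto.
    + intros m Hm p. apply (max_iff v O) in Hm; auto. destruct Hm as [z [-> Hz]].
      simpl. pose proof (M_neq v O z Hz). split. intros [[? _]|[_ ?]]; [contradiction|auto]. intro; right; auto.
  - apply G_preserves; auto.
  - exists (inr (v, length v)). split. simpl. split; auto. split. congruence. apply inr_not_max; auto. simpl; split; auto.
  - intro p. pose proof (Hleafv p). simpl in *. tauto.
  - intro p. split.
    + intro Op. destruct (O_cover v O p HOsub Hv HOopen Op) as [z [Hz Sz]].
      exists (inl z). split. apply (max_iff v O); eauto. simpl; auto.
    + intros [zz [Hm Hl]]. apply (max_iff v O) in Hm; auto. destruct Hm as [z [-> Hz]].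
      eapply M_sub; eauto.
  - intros zz zz' Hm Hm' Hne p Hl Hl'. apply (max_iff v O) in Hm; auto. apply (max_iff v O) in Hm'; auto.
    destruct Hm as [z [-> Hz]]. destruct Hm' as [z' [-> Hz']]. apply Hne. f_equal. simpl in Hl, Hl'.
    eapply M_disj; eauto.
Qed.
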